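(* Let $\mathcal{A}\subseteq\{1,\dots,T,+\infty\}$ be a finite set of adoption cohorts (ordered with $+\infty$ largest), let $\pi_a>0$ for $a\in\mathcal{A}$, and let real numbers $Y_{a,t}$ ($a\in\mathcal{A}$, $t\in\{1,\dots,T\}$), vectors $\theta_a\in\mathbb{R}^r$ ($a\in\mathcal{A}$) and $\psi_t\in\mathbb{R}^r$ ($t\in\{1,\dots,T\}$) be given. Consider the weighted least squares problem $$\min_{\{\alpha_a,\beta_t,\phi_t,\nu_a,\tau_{a,k}\}}\ \sum_{a\in\mathcal{A}}\sum_{t=1}^T \pi_a\Big(Y_{a,t}-\alpha_a-\beta_t-\theta_a^\top\phi_t-\nu_a^\top\psi_t-\mathbf{1}\{a\le t\}\tau_{a,t-a}\Big)^2,$$ over $\alpha_a\in\mathbb{R}$, $\beta_t\in\mathbb{R}$, $\phi_t\in\mathbb{R}^r$, $\nu_a\in\mathbb{R}^r$ and $\tau_{a,k}\in\mathbb{R}$ (one parameter for each $a\in\mathcal{A}$, $k\ge 0$ with $a+k\le T$), and denote by $\hat\tau^{OLS}_{a,k}$ the $\tau_{a,k}$-component of a minimizer. Suppose there exist periods $a^\star\ge t^\star$ such that the set $\{\theta_j: j\in\mathcal{A}, j>a^\star\}$ and the set $\{\psi_l: l<t^\star\}$ each affinely span $\mathbb{R}^r$. Then for every cohort $a$ and horizon $k\ge0$ with $t^\star\le a+k\le a^\star$, $\hat\tau^{OLS}_{a,k}$ is uniquely determined (the same for all minimizers), and it equals the value produced by the following sequential algorithm (Sequential OLS): for $k=0,1,\dots,a^\star-t^\star$,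 and within each $k$ for $a=t^\star,\dots,a^\star-k$ in increasing order (with $a\in\mathcal{A}$), do: (i) compute $$\tilde\omega^{(a)}:=\arg\min_{\omega}\sum_{j>a}\frac{\omega_j^2}{\pi_j}\ \text{ s.t. }\ \sum_{j>a}\omega_j=1,\ \sum_{j>a}\theta_j\omega_j=\theta_a,$$ $$\tilde\lambda^{(a,k)}:=\arg\min_{\lambda}\sum_{l<a+k}\lambda_l^2\ \text{ s.t. }\ \sum_{l<a+k}\lambda_l=1,\ \sum_{l<a+k}\lambda_l\psi_l=\psi_{a+k},$$ where $j$ ranges over cohorts in $\mathcal{A}$ with $j>a$ and $l$ over periods in $\{1,\dots,T\}$ with $l<a+k$; (ii) set $$\hat\tau^{OLS}_{a,k}:=\Big(Y_{a,a+k}-\sum_{j>a}\tilde\omega^{(a)}_jY_{j,a+k}\Big)-\sum_{l<a+k}\tilde\lambda^{(a,k)}_l\Big(Y_{a,l}-\sum_{j>a}\tilde\omega^{(a)}_jY_{j,l}\Big);$$ (iii) overwrite $Y_{a,a+k}:=Y_{a,a+k}-\hat\tau^{OLS}_{a,k}$ and use the updated data in all subsequent iterations.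
   Context: Here $\mathcal{A}$ plays the role of the set of observed adoption times (cohorts), $a=+\infty$ denoting the never-treated cohort, $Y_{a,t}$ is the average outcome of units in cohort $a$ in period $t$, and $\pi_a=n_a/n$ is the share of units in cohort $a$. The vectors $\theta_a$ (cohort factor loadings) and $\psi_t$ (time factors) are treated as known regressors (''oracle''). In the minimization, $\tau_{a,t-a}$ is the treatment effect of cohort $a$ at horizon $t-a$, present only when $a\le t$. *)

(* Defs.v *)
From Stdlib Require Import ClassicalEpsilon.
From mathcomp Require Import all_boot all_order all_algebra.
Set Implicit Arguments. Unset Strict Implicit. Unset Printing Implicit Defensive.
Import Order.TTheory GRing.Theory Num.Theory.
Local Open Scope ring_scope.

(* Encoding: periods are 1..T (nat); cohorts are nat values in 1..T.+1,
   where the value T.+1 encodes the never-treated cohort +oo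
   (it is larger than every period, so 1{a <= t} = false for t <= T). *)

Definition dotv (R : realFieldType) (r : nat) (u v : 'rV[R]_r) : R :=
  \sum_(i < r) u 0 i * v 0 i.

Definition later_cohorts (A : seq nat) (c : nat) : seq nat :=
  [seq j <- A | (c < j)%N].

Definition periods_before (T p : nat) : seq nat :=
  [seq l <- iota 1 T | (l < p)%N].

Definition affinely_spans (R : realFieldType) (r : nat) (I : seq nat)
  (v : nat -> 'rV[R]_r) : Prop :=
  forall x : 'rV[R]_r, exists w : nat -> R,
    \sum_(i <- I) w i = 1 /\ \sum_(i <- I) w i *: v i = x.

Definition omega_feasible (R : realFieldType) (r : nat) (A : seq nat)
  (theta : nat -> 'rV[R]_r) (a : nat) (w : nat -> R) : Prop :=
  \sum_(j <- later_cohorts A a) w j = 1 /\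
  \sum_(j <- later_cohorts A a) w j *: theta j = theta a.

Definition is_omega_tilde (R : realFieldType) (r : nat) (A : seq nat)
  (pi : nat -> R) (theta : nat -> 'rV[R]_r) (a : nat) (w : nat -> R) : Prop :=
  omega_feasible A theta a w /\
  forall w' : nat -> R, omega_feasible A theta a w' ->
    \sum_(j <- later_cohorts A a) w j ^+ 2 / pi j <=
    \sum_(j <- later_cohorts A a) w' j ^+ 2 / pi j.

Definition omega_tilde (R : realFieldType) (r : nat) (A : seq nat)
  (pi : nat -> R) (theta : nat -> 'rV[R]_r) (a : nat) : nat -> R :=
  epsilon (inhabits (fun _ : nat => (0 : R))) (is_omega_tilde A pi theta a).

(* p plays the role of a + k *)
Definition lambda_feasible (R : realFieldType) (r : nat) (T : nat)
  (psi : nat -> 'rV[R]_r) (p : nat) (lam : nat -> R) : Prop :=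
  \sum_(l <- periods_before T p) lam l = 1 /\
  \sum_(l <- periods_before T p) lam l *: psi l = psi p.

Definition is_lambda_tilde (R : realFieldType) (r : nat) (T : nat)
  (psi : nat -> 'rV[R]_r) (p : nat) (lam : nat -> R) : Prop :=
  lambda_feasible T psi p lam /\
  forall lam' : nat -> R, lambda_feasible T psi p lam' ->
    \sum_(l <- periods_before T p) lam l ^+ 2 <=
    \sum_(l <- periods_before T p) lam' l ^+ 2.

Definition lambda_tilde (R : realFieldType) (r : nat) (T : nat)
  (psi : nat -> 'rV[R]_r) (p : nat) : nat -> R :=
  epsilon (inhabits (fun _ : nat => (0 : R))) (is_lambda_tilde T psi p).

Definition seq_ols_step (R : realFieldType) (r : nat) (A : seq nat) (T : nat)
  (pi : nat -> R) (theta psi : nat -> 'rV[R]_r)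
  (st : (nat -> nat -> R) * (nat -> nat -> R)) (ak : nat * nat)
  : (nat -> nat -> R) * (nat -> nat -> R) :=
  let Y := st.1 in let tau := st.2 in
  let a := ak.1 in let k := ak.2 in
  let w := omega_tilde A pi theta a in
  let lam := lambda_tilde T psi (a + k) in
  let that :=
    (Y a (a + k) - \sum_(j <- later_cohorts A a) w j * Y j (a + k))
    - \sum_(l <- periods_before T (a + k))
        lam l * (Y a l - \sum_(j <- later_cohorts A a) w j * Y j l) in
  (fun b s => if (b == a) && (s == a + k)%N then Y b s - that else Y b s,
   fun b m => if (b == a) && (m == k) then that else tau b m).

Definition seq_ols_order (A : seq nat) (tstar astar : nat) : seq (nat * nat) :=
  flatten [seq [seq (a, k) | a <- [seq a <- iota tstar (astar - k - tstar).+1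
                                   | a \in A]]
          | k <- iota 0 (astar - tstar).+1].

Definition seq_ols (R : realFieldType) (r : nat) (A : seq nat) (T : nat)
  (pi : nat -> R) (Y : nat -> nat -> R) (theta psi : nat -> 'rV[R]_r)
  (tstar astar : nat) : nat -> nat -> R :=
  (foldl (seq_ols_step A T pi theta psi) (Y, fun _ _ => 0)
         (seq_ols_order A tstar astar)).2.

Definition ols_obj (R : realFieldType) (r : nat) (A : seq nat) (T : nat)
  (pi : nat -> R) (Y : nat -> nat -> R) (theta psi : nat -> 'rV[R]_r)
  (al be : nat -> R) (ph nu : nat -> 'rV[R]_r) (tau : nat -> nat -> R) : R :=
  \sum_(a <- A) \sum_(1 <= t < T.+1)
     pi a * (Y a t - al a - be t - dotv (theta a) (ph t) - dotv (nu a) (psi t)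
             - ((a <= t)%N)%:R * tau a (t - a)%N) ^+ 2.

Definition is_ols_minimizer (R : realFieldType) (r : nat) (A : seq nat) (T : nat)
  (pi : nat -> R) (Y : nat -> nat -> R) (theta psi : nat -> 'rV[R]_r)
  (al be : nat -> R) (ph nu : nat -> 'rV[R]_r) (tau : nat -> nat -> R) : Prop :=
  forall (al' be' : nat -> R) (ph' nu' : nat -> 'rV[R]_r) (tau' : nat -> nat -> R),
    ols_obj A T pi Y theta psi al be ph nu tau
    <= ols_obj A T pi Y theta psi al' be' ph' nu' tau'.

(* Main.v *)
Require Import Defs.
From Stdlib Require Import ClassicalEpsilon Classical.
From mathcomp Require Import all_boot all_order all_algebra.
From mathcomp Require Import ring lra zify.
Set Implicit Arguments. Unset Strict Implicit. Unset Printing Implicit Defensive.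
Import Order.TTheory GRing.Theory Num.Theory.
Local Open Scope ring_scope.

Lemma dotvC (R : realFieldType) r (u v : 'rV[R]_r) : dotv u v = dotv v u.
Proof. by apply: eq_bigr => i _; rewrite mulrC. Qed.

Lemma dotvDr (R : realFieldType) r (u v w : 'rV[R]_r) :
  dotv u (v + w) = dotv u v + dotv u w.
Proof. by rewrite /dotv -big_split; apply: eq_bigr => i _; rewrite mxE mulrDr. Qed.

Lemma dotvZr (R : realFieldType) r (u v : 'rV[R]_r) c :
  dotv u (c *: v) = c * dotv u v.
Proof. rewrite /dotv mulr_sumr; apply: eq_bigr => i _; rewrite mxE; ring. Qed.

Lemma dotv0r (R : realFieldType) r (u : 'rV[R]_r) : dotv u 0 = 0.
Proof. by rewrite /dotv big1 // => i _; rewrite mxE mulr0. Qed.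

Lemma dotvDl (R : realFieldType) r (u v w : 'rV[R]_r) :
  dotv (v + w) u = dotv v u + dotv w u.
Proof. by rewrite dotvC dotvDr !(dotvC u). Qed.

Lemma dotvZl (R : realFieldType) r (u v : 'rV[R]_r) c :
  dotv (c *: v) u = c * dotv v u.
Proof. by rewrite dotvC dotvZr dotvC. Qed.

Lemma dotv0l (R : realFieldType) r (u : 'rV[R]_r) : dotv 0 u = 0.
Proof. by rewrite dotvC dotv0r. Qed.

Lemma dotv_suml (R : realFieldType) r (I : Type) (s : seq I) (c : I -> R)
   (v : I -> 'rV[R]_r) u :
  dotv (\sum_(j <- s) c j *: v j) u = \sum_(j <- s) c j * dotv (v j) u.
Proof.
elim: s => [|x s IH]; first by rewrite !big_nil dotv0l.
by rewrite !big_cons dotvDl dotvZl IH.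
Qed.

Lemma dotv_sumr (R : realFieldType) r (I : Type) (s : seq I) (c : I -> R)
   (v : I -> 'rV[R]_r) u :
  dotv u (\sum_(j <- s) c j *: v j) = \sum_(j <- s) c j * dotv u (v j).
Proof. rewrite dotvC dotv_suml; by apply: eq_bigr => j _; rewrite dotvC. Qed.

Lemma dotv_self0 (R : realFieldType) r (u : 'rV[R]_r) : dotv u u = 0 -> u = 0.
Proof.
move=> /eqP; rewrite /dotv psumr_eq0; last by move=> i _; rewrite -expr2 sqr_ge0.
move=> /allP H; apply/rowP => i; rewrite mxE.
have := H i (mem_index_enum i); rewrite implyTb mulf_eq0 orbb => /eqP //.
Qed.

Lemma perturb0 (R : realFieldType) (L Q : R) :
  0 <= Q -> (forall s : R, 0 <= s ^+ 2 * Q - 2 * s * L) -> L = 0.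
Proof.
move=> Q0 H; have := H (L / (Q + 1)).
have Q1 : 0 < Q + 1 by lra.
have -> : (L / (Q + 1)) ^+ 2 * Q - 2 * (L / (Q + 1)) * L
   = - (L ^+ 2 * (Q + 2)) / (Q + 1) ^+ 2.
  by field; lra.
rewrite pmulr_lge0 ?invr_gt0 ?exprn_gt0 // oppr_ge0 => HL.
have : L ^+ 2 * (Q + 2) = 0.
  apply/eqP; rewrite eq_le HL /= mulr_ge0 ?sqr_ge0 //; lra.
by move/eqP; rewrite mulf_eq0 sqrf_eq0 => /orP [/eqP//|]; lra.
Qed.

Definition fe (R : realFieldType) r (v : nat -> 'rV[R]_r) (j : nat) : 'rV[R]_(1 + r) :=
  row_mx (const_mx 1 : 'rV[R]_1) (v j).

Lemma fe_coord (R : realFieldType) r (v : nat -> 'rV[R]_r) j (z : 'rV[R]_(1 + r)) :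
  (z *m (fe v j)^T) 0 0 = z 0 (lshift r 0) + dotv (v j) (rsubmx z).
Proof.
rewrite mxE big_split_ord /= big_ord1 /fe [X in _ * X]mxE row_mxEl mxE mulr1.
congr (_ + _); rewrite /dotv; apply: eq_bigr => i _.
by rewrite [X in _ * X]mxE row_mxEr mxE mulrC.
Qed.

Lemma fe_coord' (R : realFieldType) r (v : nat -> 'rV[R]_r) j (z : 'rV[R]_(1 + r)) :
  (fe v j *m z^T) 0 0 = (z *m (fe v j)^T) 0 0.
Proof. by rewrite !mxE; apply: eq_bigr => i _; rewrite !mxE mulrC. Qed.

Lemma minnorm_exists (R : realFieldType) r (S : seq nat) (p : nat -> R)
  (v : nat -> 'rV[R]_r) (x : 'rV[R]_r) :
  (forall j, j \in S -> 0 < p j) -> affinely_spans S v ->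
  exists (c : R) (d : 'rV[R]_r),
    \sum_(j <- S) p j * (c + dotv (v j) d) = 1 /\
    \sum_(j <- S) (p j * (c + dotv (v j) d)) *: v j = x.
Proof.
move=> pos aff.
pose G := \sum_(j <- S) p j *: ((fe v j)^T *m fe v j).
have Hrow : forall u : 'rV[R]_(1 + r), u *m G = 0 -> u = 0.
  move=> u uG.
  have E : (u *m G *m u^T) 0 0 = \sum_(j <- S) p j * ((u *m (fe v j)^T) 0 0) ^+ 2.
    rewrite mulmx_sumr mulmx_suml summxE; apply: eq_bigr => j _.
    rewrite -scalemxAr -scalemxAl mxE; congr (_ * _).
    rewrite !mulmxA -(mulmxA (u *m _)) [u *m (fe v j)^T]mx11_scalar mul_scalar_mx mxE.
    by rewrite fe_coord' [in RHS]mxE eqxx mulr1n expr2.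
  have : \sum_(j <- S) p j * ((u *m (fe v j)^T) 0 0) ^+ 2 == 0.
    by rewrite -E uG !mul0mx mxE.
  rewrite big_seq psumr_eq0; last by move=> j jS; rewrite mulr_ge0 ?sqr_ge0 ?ltW ?pos.
  move=> /allP H0.
  have q0 : forall j, j \in S -> u 0 (lshift r 0) + dotv (v j) (rsubmx u) = 0.
    move=> j jS; have := H0 j jS; rewrite jS implyTb mulf_eq0 sqrf_eq0.
    by rewrite gt_eqF ?pos //= -fe_coord => /eqP.
  have qy : forall y, u 0 (lshift r 0) + dotv y (rsubmx u) = 0.
    move=> y; have [w [w1 wy]] := aff y.
    have H1 : \sum_(j <- S) w j * (u 0 (lshift r 0) + dotv (v j) (rsubmx u)) = 0.
      by rewrite big1_seq // => j /andP [_ jS]; rewrite q0 // mulr0.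
    rewrite -H1 -wy dotv_suml -{1}[u 0 _]mulr1 -w1 mulr_sumr -big_split /=.
    by apply: eq_bigr => j _; rewrite mulrDr mulrC.
  have u0 : u 0 (lshift r 0) = 0 by have := qy 0; rewrite dotv0l addr0.
  have u1 : rsubmx u = 0.
    by apply: dotv_self0; have := qy (rsubmx u); rewrite u0 add0r.
  rewrite -[u]hsubmxK u1; apply/rowP => k; rewrite !mxE.
  case: splitP => [i _|i _]; last by rewrite mxE.
  by rewrite ord1 mxE.
have Gu : G \in unitmx.
  rewrite -row_free_unit -kermx_eq0; apply/eqP/row_matrixP => i.
  by rewrite row0; apply: Hrow; rewrite -row_mul mulmx_ker row0.
pose tgt := row_mx (const_mx 1 : 'rV[R]_1) x.
pose z := tgt *m invmx G.
exists (z 0 (lshift r 0)), (rsubmx z).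
have key : \sum_(j <- S) (p j * (z 0 (lshift r 0) + dotv (v j) (rsubmx z))) *: fe v j = tgt.
  rewrite -(mulmxKV Gu tgt) -/z /G mulmx_sumr; apply: eq_bigr => j _.
  rewrite -fe_coord -scalerA -scalemxAr mulmxA; congr (_ *: _).
  by rewrite -mul_scalar_mx -mx11_scalar.
clearbody z; split.
  have := congr1 (fun M : 'rV[R]_(1 + r) => M 0 (lshift r 0)) key; rewrite /= summxE /tgt row_mxEl mxE.
  move=> <-; apply: eq_bigr => j _; by rewrite mxE /fe row_mxEl mxE mulr1.
apply/rowP => i.
have := congr1 (fun M : 'rV[R]_(1 + r) => M 0 (rshift 1 i)) key; rewrite /= summxE /tgt row_mxEr.
move=> <-; rewrite summxE; apply: eq_bigr => j _; by rewrite [RHS]mxE /fe row_mxEr mxE.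
Qed.

Definition feas (R : realFieldType) r (S : seq nat) (v : nat -> 'rV[R]_r) (x : 'rV[R]_r)
  (w : nat -> R) : Prop :=
  \sum_(j <- S) w j = 1 /\ \sum_(j <- S) w j *: v j = x.

Definition isminp (R : realFieldType) r (S : seq nat) (p : nat -> R)
  (v : nat -> 'rV[R]_r) (x : 'rV[R]_r) (w : nat -> R) : Prop :=
  feas S v x w /\ forall w', feas S v x w' ->
    \sum_(j <- S) w j ^+ 2 / p j <= \sum_(j <- S) w' j ^+ 2 / p j.

Lemma lagrange_decomp (R : realFieldType) r (S : seq nat) (p : nat -> R)
  (v : nat -> 'rV[R]_r) (x : 'rV[R]_r) c d w' :
  (forall j, j \in S -> 0 < p j) ->
  feas S v x (fun j => p j * (c + dotv (v j) d)) -> feas S v x w' ->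
  \sum_(j <- S) w' j ^+ 2 / p j =
  \sum_(j <- S) (p j * (c + dotv (v j) d)) ^+ 2 / p j +
  \sum_(j <- S) (w' j - p j * (c + dotv (v j) d)) ^+ 2 / p j.
Proof.
move=> pos [w1 wx] [w'1 w'x].
set w := fun j => p j * (c + dotv (v j) d).
have E : \sum_(j <- S) w' j ^+ 2 / p j =
   \sum_(j <- S) (w j ^+ 2 / p j + (w' j - w j) ^+ 2 / p j
                   + 2 * ((w' j - w j) * (c + dotv (v j) d))).
  rewrite big_seq [RHS]big_seq; apply: eq_bigr => j jS.
  have pj := pos j jS; rewrite /w; field; lra.
have Z : \sum_(j <- S) (w' j - w j) * (c + dotv (v j) d) = 0.
  have -> : \sum_(j <- S) (w' j - w j) * (c + dotv (v j) d) =
     c * (\sum_(j <- S) w' j - \sum_(j <- S) w j)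
     + (dotv (\sum_(j <- S) w' j *: v j) d - dotv (\sum_(j <- S) w j *: v j) d).
    rewrite !dotv_suml mulrBr !mulr_sumr -!sumrB -big_split /=.
    by apply: eq_bigr => j _; ring.
  by rewrite w1 w'1 wx w'x !subrr mulr0 addr0.
by rewrite E !big_split /= -mulr_sumr Z mulr0 addr0.
Qed.

Lemma minnorm_char (R : realFieldType) r (S : seq nat) (p : nat -> R)
  (v : nat -> 'rV[R]_r) (x : 'rV[R]_r) :
  (forall j, j \in S -> 0 < p j) -> affinely_spans S v ->
  exists (c : R) (d : 'rV[R]_r),
    isminp S p v x (fun j => p j * (c + dotv (v j) d)) /\
    forall w, isminp S p v x w -> forall j, j \in S -> w j = p j * (c + dotv (v j) d).
Proof.
move=> pos aff; have [c [d [H1 H2]]] := minnorm_exists x pos aff.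
have F : feas S v x (fun j => p j * (c + dotv (v j) d)) by [].
exists c, d; split.
  split => // w' Fw'; rewrite (lagrange_decomp pos F Fw') lerDl.
  rewrite big_seq sumr_ge0 // => j jS.
  by rewrite divr_ge0 ?sqr_ge0 // ltW // pos.
move=> w [Fw minw] j jS.
have := minw _ F; rewrite (lagrange_decomp pos F Fw) gerDl.
move=> Hle.
have H0 : \sum_(j <- S) (w j - p j * (c + dotv (v j) d)) ^+ 2 / p j == 0.
  rewrite eq_le Hle /= big_seq sumr_ge0 // => i iS.
  by rewrite divr_ge0 ?sqr_ge0 // ltW // pos.
move: H0; rewrite big_seq psumr_eq0; last first.
  by move=> i iS; rewrite divr_ge0 ?sqr_ge0 // ltW // pos.
move=> /allP /(_ j jS); rewrite jS implyTb mulf_eq0 invr_eq0 (gt_eqF (pos j jS)) orbF.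
by rewrite sqrf_eq0 subr_eq0 => /eqP.
Qed.

Lemma aff_sub (R : realFieldType) r (S1 S2 : seq nat) (v : nat -> 'rV[R]_r) :
  uniq S1 -> uniq S2 -> {subset S1 <= S2} ->
  affinely_spans S1 v -> affinely_spans S2 v.
Proof.
move=> u1 u2 sub aff x; have [w [w1 wx]] := aff x.
exists (fun j => if j \in S1 then w j else 0).
have P : perm_eq [seq j <- S2 | j \in S1] S1.
  apply: uniq_perm; first by rewrite filter_uniq.
    by [].
  by move=> j; rewrite mem_filter; case jS: (j \in S1) => //=; rewrite sub.
split.
  by rewrite -big_mkcond /= -big_filter (perm_big _ P).
rewrite -wx -(perm_big _ P) big_filter /=.
rewrite [RHS]big_mkcond; apply: eq_bigr => j _; by case: ifP => //; rewrite scale0r.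
Qed.

Definition Qf (R : realFieldType) m (wt y u : 'rV[R]_m) : R :=
  \sum_k wt 0 k * (y 0 k - u 0 k) ^+ 2.

Definition Lf (R : realFieldType) m (wt a b : 'rV[R]_m) : R :=
  \sum_k wt 0 k * a 0 k * b 0 k.

Lemma orth_min (R : realFieldType) m (wt y u v : 'rV[R]_m) :
  (forall k, 0 <= wt 0 k) -> Lf wt (y - u) (u - v) = 0 -> Qf wt y u <= Qf wt y v.
Proof.
move=> pos H.
have -> : Qf wt y v = Qf wt y u + \sum_k wt 0 k * (u 0 k - v 0 k) ^+ 2
                       + 2 * Lf wt (y - u) (u - v).
  rewrite /Qf /Lf mulr_sumr -!big_split /=; apply: eq_bigr => k _.
  rewrite !mxE; ring.
rewrite H mulr0 addr0 lerDl sumr_ge0 // => k _.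
by rewrite mulr_ge0 ?sqr_ge0.
Qed.

Lemma min_orth (R : realFieldType) m (wt y u : 'rV[R]_m) (P : 'rV[R]_m -> Prop) :
  (forall k, 0 <= wt 0 k) ->
  (forall u v, P u -> P v -> P (u + v)) -> (forall c u, P u -> P (c *: u)) ->
  P u -> (forall v, P v -> Qf wt y u <= Qf wt y v) ->
  forall v, P v -> Lf wt (y - u) v = 0.
Proof.
move=> pos Padd Pscal Pu umin v Pv.
apply: (@perturb0 _ _ (\sum_k wt 0 k * v 0 k ^+ 2)).
  by rewrite sumr_ge0 // => k _; rewrite mulr_ge0 ?sqr_ge0.
move=> s; have := umin _ (Padd _ _ Pu (Pscal s _ Pv)).
rewrite -subr_ge0.
have -> : Qf wt y (u + s *: v) - Qf wt y u =
   s ^+ 2 * (\sum_k wt 0 k * v 0 k ^+ 2) - 2 * s * Lf wt (y - u) v.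
  rewrite /Qf /Lf mulr_sumr mulr_sumr -!sumrB; apply: eq_bigr => k _.
  rewrite !mxE; ring.
by [].
Qed.

Lemma ipD (R : realFieldType) m (wt a b : 'rV[R]_m) :
  (a *m diag_mx wt *m b^T) 0 0 = Lf wt a b.
Proof.
rewrite mul_mx_diag mxE /Lf; apply: eq_bigr => k _; rewrite !mxE; ring.
Qed.

Lemma span_exists (R : realFieldType) m (P : 'rV[R]_m -> Prop) :
  P 0 -> (forall u v, P u -> P v -> P (u + v)) -> (forall c u, P u -> P (c *: u)) ->
  exists n (X : 'M[R]_(n, m)), (forall c, P (c *m X)) /\
     (forall v, P v -> (v <= X)%MS).
Proof.
move=> P0 Padd Pscal.
suff H : forall d n (X : 'M[R]_(n, m)), (forall c, P (c *m X)) ->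
   (m - \rank X <= d)%N ->
   exists n (X : 'M[R]_(n, m)), (forall c, P (c *m X)) /\ (forall v, P v -> (v <= X)%MS).
  apply: (H m 0%N (0 : 'M[R]_(0, m))); last by rewrite leq_subr.
  by move=> c; rewrite mulmx0.
elim=> [|d IH] n X PX hd.
  exists n, X; split => // v _.
  have fX : row_full X by rewrite /row_full eqn_leq rank_leq_col; lia.
  by rewrite submx_full.
case: (classic (forall v, P v -> (v <= X)%MS)) => [H|H].
  by exists n, X.
have [v Hv] := not_all_ex_not _ _ H.
have [Pv nvX] : P v /\ ~~ (v <= X)%MS.
  by split; [apply: NNPP => nP; apply: Hv | apply/negP => vX; apply: Hv].
apply: (IH _ (col_mx X v)).
  move=> c; rewrite -[c]hsubmxK mul_row_col.
  apply: Padd; first by apply: PX.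
  by rewrite [rsubmx c]mx11_scalar mul_scalar_mx; apply: Pscal.
have sX : (X <= col_mx X v)%MS.
  have E : row_mx 1%:M 0 *m col_mx X v = X by rewrite mul_row_col mul1mx mul0mx addr0.
  by rewrite -{1}E; exact: submxMl.
have := ltn_leqif (mxrank_leqif_sup sX).
rewrite col_mx_sub submx_refl /= (negbTE nvX) /= => lt.
have := rank_leq_col (col_mx X v); lia.
Qed.

Lemma proj_exists (R : realFieldType) m (wt y : 'rV[R]_m) (P : 'rV[R]_m -> Prop) :
  (forall k, 0 < wt 0 k) ->
  P 0 -> (forall u v, P u -> P v -> P (u + v)) -> (forall c u, P u -> P (c *: u)) ->
  exists u, P u /\ forall v, P v -> Qf wt y u <= Qf wt y v.
Proof.
move=> pos P0 Padd Pscal.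
have [n [X [PX spanX]]] := span_exists P0 Padd Pscal.
pose D := diag_mx wt.
pose S := X *m D *m X^T.
have kerS : forall u : 'rV[R]_n, u *m S = 0 -> u *m X = 0.
  move=> u uS.
  have : Lf wt (u *m X) (u *m X) = 0.
    rewrite -ipD trmx_mul !mulmxA.
    have -> : u *m X *m diag_mx wt *m X^T = u *m S by rewrite /S !mulmxA.
    by rewrite uS !mul0mx mxE.
  move=> /eqP; rewrite /Lf psumr_eq0; last first.
    by move=> k _; rewrite -mulrA -expr2 mulr_ge0 ?sqr_ge0 // ltW // pos.
  move=> /allP H; apply/rowP => k; rewrite [RHS]mxE.
  have := H k (mem_index_enum k); rewrite implyTb -mulrA mulf_eq0 (gt_eqF (pos k)) /=.
  by rewrite mulf_eq0 orbb => /eqP.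
have kSX : (kermx S <= kermx X)%MS.
  apply/sub_kermxP/row_matrixP => i; rewrite row_mul row0; apply: kerS.
  by rewrite -row_mul mulmx_ker row0.
have rk : (\rank X <= \rank S)%N.
  have := mxrankS kSX; rewrite !mxrank_ker.
  have := rank_leq_row S; have := rank_leq_row X; lia.
have sS : (S <= X^T)%MS by exact: submxMl.
have XS : (X^T <= S)%MS.
  have := mxrank_leqif_sup sS; rewrite mxrank_tr => H.
  by rewrite -(geq_leqif H).
have yS : (y *m D *m X^T <= S)%MS.
  by apply: submx_trans XS; exact: submxMl.
have [c cE] := submxP yS.
exists (c *m X); split; first exact: PX.
move=> v Pv; have [c' ->] := submxP (spanX v Pv).
apply: orth_min; first by move=> k; apply: ltW.
rewrite -ipD -mulmxBl trmx_mul !mulmxA mulmxBl mulmxBl cE /S !mulmxA.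
by rewrite subrr !mul0mx mxE.
Qed.

Definition cellI (A : seq nat) (T : nat) := ('I_(size A) * 'I_T)%type.

Definition vecc (R : realFieldType) (A : seq nat) (T : nat) (G : nat -> nat -> R)
  : 'rV[R]_#|{: cellI A T}| :=
  \row_k G (nth 0%N A (enum_val k : cellI A T).1) (enum_val k : cellI A T).2.+1.

Lemma sum_cells (R : realFieldType) (A : seq nat) (T : nat) (G : nat -> nat -> R) :
  \sum_(k < #|{: cellI A T}|) G (nth 0%N A (enum_val k : cellI A T).1) (enum_val k : cellI A T).2.+1
  = \sum_(a <- A) \sum_(1 <= t < T.+1) G a t.
Proof.
rewrite -(big_enum_val (fun i : cellI A T => G (nth 0%N A i.1) i.2.+1)) /=.
rewrite -(pair_big predT predT (fun (i : 'I_(size A)) (j : 'I_T) => G (nth 0%N A i) j.+1)) /=.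
rewrite (big_nth 0%N) big_mkord; apply: eq_bigr => i _.
by rewrite big_add1 /= big_mkord.
Qed.

Lemma sum_delta (R : realFieldType) (s : seq nat) b (F : nat -> R) :
  uniq s -> b \in s -> \sum_(a <- s) (if a == b then F a else 0) = F b.
Proof.
elim: s => [|x s IH] //= /andP [xs us]; rewrite in_cons big_cons.
case: eqP => [->|nxb] /= bs.
  rewrite eqxx big1_seq ?addr0 // => a /andP [_ aS]; case: eqP => // ab.
  by move: xs; rewrite -ab aS.
by case: eqP => [xb|_]; [case: nxb | rewrite add0r IH].
Qed.

Definition Phi (R : realFieldType) r (theta psi : nat -> 'rV[R]_r)
  (al be : nat -> R) (ph nu : nat -> 'rV[R]_r) (tau : nat -> nat -> R) (a t : nat) : R :=
  al a + be t + dotv (theta a) (ph t) + dotv (nu a) (psi t) + ((a <= t)%N)%:R * tau a (t - a)%N.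

Definition PhiP (R : realFieldType) r (A : seq nat) T (theta psi : nat -> 'rV[R]_r)
   (u : 'rV[R]_#|{: cellI A T}|) : Prop :=
  exists (al be : nat -> R) (ph nu : nat -> 'rV[R]_r) (tau : nat -> nat -> R),
    u = vecc A T (Phi theta psi al be ph nu tau).
Arguments PhiP {R r} A T theta psi u.
Arguments vecc {R} A T G.

Lemma obj_Qf (R : realFieldType) r (A : seq nat) (T : nat)
  (pi : nat -> R) (Y : nat -> nat -> R) (theta psi : nat -> 'rV[R]_r) al be ph nu tau :
  ols_obj A T pi Y theta psi al be ph nu tau =
  Qf (vecc A T (fun a _ => pi a)) (vecc A T Y) (vecc A T (Phi theta psi al be ph nu tau)).
Proof.
rewrite /Qf /ols_obj.
rewrite -(sum_cells A T (fun a t => pi a * (Y a t - al a - be t - dotv (theta a) (ph t) -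
   dotv (nu a) (psi t) - ((a <= t)%N)%:R * tau a (t - a)%N) ^+ 2)).
apply: eq_bigr => k _; rewrite !mxE /Phi; congr (_ * _ ^+ 2); ring.
Qed.

Lemma PhiP_closed (R : realFieldType) r (A : seq nat) T (theta psi : nat -> 'rV[R]_r) :
  [/\ PhiP A T theta psi 0,
      (forall u v, PhiP A T theta psi u -> PhiP A T theta psi v -> PhiP A T theta psi (u + v)) &
      (forall c u, PhiP A T theta psi u -> PhiP A T theta psi (c *: u))].
Proof.
split.
- exists (fun _ => 0), (fun _ => 0), (fun _ => 0), (fun _ => 0), (fun _ _ => 0).
  apply/rowP => k; rewrite !mxE /Phi dotv0r dotv0l; ring.
- move=> u v [al [be [ph [nu [tau ->]]]]] [al' [be' [ph' [nu' [tau' ->]]]]].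
  exists (fun a => al a + al' a), (fun t => be t + be' t), (fun t => ph t + ph' t),
    (fun a => nu a + nu' a), (fun a k => tau a k + tau' a k).
  apply/rowP => k; rewrite !mxE /Phi dotvDr dotvDl; ring.
- move=> c u [al [be [ph [nu [tau ->]]]]].
  exists (fun a => c * al a), (fun t => c * be t), (fun t => c *: ph t),
    (fun a => c *: nu a), (fun a k => c * tau a k).
  apply/rowP => k; rewrite !mxE /Phi dotvZr dotvZl; ring.
Qed.

Lemma wt_pos (R : realFieldType) (A : seq nat) T (pi : nat -> R) :
  (forall a, a \in A -> 0 < pi a) -> forall k, 0 < (vecc A T (fun a _ => pi a)) 0 k.
Proof.
move=> pos k; rewrite mxE; apply: pos; apply: mem_nth; exact: ltn_ord.
Qed.

Lemma ols_exists (R : realFieldType) r (A : seq nat) (T : nat)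
  (pi : nat -> R) (Y : nat -> nat -> R) (theta psi : nat -> 'rV[R]_r) :
  (forall a, a \in A -> 0 < pi a) ->
  exists (al be : nat -> R) (ph nu : nat -> 'rV[R]_r) (tau : nat -> nat -> R),
      is_ols_minimizer A T pi Y theta psi al be ph nu tau.
Proof.
move=> pos; have [P0 Padd Pscal] := PhiP_closed A T theta psi.
have [u [[al [be [ph [nu [tau ->]]]]] umin]] :=
  proj_exists (vecc A T Y) (@wt_pos _ A T pi pos) P0 Padd Pscal.
exists al, be, ph, nu, tau => al' be' ph' nu' tau'.
rewrite !obj_Qf; apply: umin; by exists al', be', ph', nu', tau'.
Qed.

Lemma ols_orth (R : realFieldType) r (A : seq nat) (T : nat)
  (pi : nat -> R) (Y : nat -> nat -> R) (theta psi : nat -> 'rV[R]_r) al be ph nu tau :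
  (forall a, a \in A -> 0 < pi a) ->
  is_ols_minimizer A T pi Y theta psi al be ph nu tau ->
  forall al' be' ph' nu' tau',
  \sum_(a <- A) \sum_(1 <= t < T.+1)
     pi a * (Y a t - Phi theta psi al be ph nu tau a t) *
     Phi theta psi al' be' ph' nu' tau' a t = 0.
Proof.
move=> pos Hmin al' be' ph' nu' tau'.
have [P0 Padd Pscal] := PhiP_closed A T theta psi.
have := @min_orth _ _ (vecc A T (fun a _ => pi a)) (vecc A T Y)
   (vecc A T (Phi theta psi al be ph nu tau)) (PhiP A T theta psi).
move=> /(_ (fun k => ltW (@wt_pos _ A T pi pos k)) Padd Pscal).
have Pu : PhiP A T theta psi (vecc A T (Phi theta psi al be ph nu tau)).
  by exists al, be, ph, nu, tau.
move=> /(_ Pu) H.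
have {}H : forall v, PhiP A T theta psi v -> Lf (vecc A T (fun a _ => pi a)) (vecc A T Y - vecc A T (Phi theta psi al be ph nu tau)) v = 0.
  apply: H => v [al2 [be2 [ph2 [nu2 [tau2 ->]]]]]; rewrite -!obj_Qf; exact: Hmin.
have H2 := H (vecc A T (Phi theta psi al' be' ph' nu' tau'))
  (ex_intro _ al' (ex_intro _ be' (ex_intro _ ph' (ex_intro _ nu' (ex_intro _ tau' erefl))))).
rewrite /Lf in H2.
rewrite -(sum_cells A T (fun a t => pi a * (Y a t - Phi theta psi al be ph nu tau a t) *
     Phi theta psi al' be' ph' nu' tau' a t)).
apply: etrans H2; by apply: eq_bigr => k _; rewrite !mxE.
Qed.

Lemma sum_if (R : realFieldType) (I : Type) (s : seq I) (b : bool) (F : I -> R) :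
  \sum_(i <- s) (if b then F i else 0) = if b then \sum_(i <- s) F i else 0.
Proof. by case: b => //; rewrite big1. Qed.

Lemma NE1 (R : realFieldType) r (A : seq nat) (T : nat)
  (pi : nat -> R) (Y : nat -> nat -> R) (theta psi : nat -> 'rV[R]_r) al be ph nu tau :
  uniq A -> (forall a, a \in A -> 0 < pi a) ->
  is_ols_minimizer A T pi Y theta psi al be ph nu tau ->
  forall b t0, b \in A -> (b <= t0)%N -> (1 <= t0 <= T)%N ->
  Y b t0 - Phi theta psi al be ph nu tau b t0 = 0.
Proof.
move=> uA pos Hmin b t0 bA bt t0T.
have := ols_orth pos Hmin (fun _ => 0) (fun _ => 0) (fun _ => 0) (fun _ => 0)
   (fun a k => if (a == b) && (k == t0 - b)%N then 1 else 0).
set e := fun a t => Y a t - Phi theta psi al be ph nu tau a t.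
rewrite -/e.
have -> : \sum_(a <- A) \sum_(1 <= t < T.+1) pi a * e a t *
     Phi theta psi (fun=> 0) (fun=> 0) (fun=> 0) (fun=> 0)
       (fun a k => if (a == b) && (k == t0 - b)%N then 1 else 0) a t =
   \sum_(a <- A) (if a == b then \sum_(1 <= t < T.+1)
        (if t == t0 then pi a * e a t else 0) else 0).
  apply: eq_bigr => a _; rewrite -sum_if; apply: eq_bigr => t _.
  rewrite /Phi dotv0r dotv0l !add0r.
  case: (eqVneq a b) => [->|nab] /=; last by rewrite mulr0 mulr0.
  case: (eqVneq t t0) => [->|ntt] /=; first by rewrite bt eqxx mulr1 mulr1.
  case: (leqP b t) => bt' /=; last by rewrite mul0r mulr0.
  have -> : (t - b == t0 - b)%N = false by apply/negbTE; lia.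
  by rewrite mulr0 mulr0.
rewrite sum_delta // sum_delta ?iota_uniq //; last by rewrite mem_index_iota.
by move/eqP; rewrite mulf_eq0 (gt_eqF (pos b bA)) /= => /eqP.
Qed.

Lemma NE2 (R : realFieldType) r (A : seq nat) (T : nat)
  (pi : nat -> R) (Y : nat -> nat -> R) (theta psi : nat -> 'rV[R]_r) al be ph nu tau :
  uniq A -> (forall a, a \in A -> 0 < pi a) ->
  is_ols_minimizer A T pi Y theta psi al be ph nu tau ->
  forall j c d, j \in A ->
  \sum_(1 <= t < T.+1) (Y j t - Phi theta psi al be ph nu tau j t) * (c + dotv (psi t) d) = 0.
Proof.
move=> uA pos Hmin j c d jA.
have := ols_orth pos Hmin (fun a => if a == j then c else 0) (fun _ => 0) (fun _ => 0)
   (fun a => if a == j then d else 0) (fun _ _ => 0).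
set e := fun a t => Y a t - Phi theta psi al be ph nu tau a t.
rewrite -/e.
have -> : \sum_(a <- A) \sum_(1 <= t < T.+1) pi a * e a t *
     Phi theta psi (fun a => if a == j then c else 0) (fun=> 0) (fun=> 0)
       (fun a => if a == j then d else 0) (fun _ _ => 0) a t =
   \sum_(a <- A) (if a == j then pi a * \sum_(1 <= t < T.+1)
        (e a t * (c + dotv (psi t) d)) else 0).
  apply: eq_bigr => a _; case: (eqVneq a j) => [->|naj].
    rewrite mulr_sumr; apply: eq_bigr => t _.
    by rewrite /Phi eqxx dotv0r dotvC; ring.
  apply: big1 => t _; rewrite /Phi (negbTE naj) dotv0r dotv0l; ring.
rewrite sum_delta //.
by move/eqP; rewrite mulf_eq0 (gt_eqF (pos j jA)) /= => /eqP.
Qed.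

Lemma NE3 (R : realFieldType) r (A : seq nat) (T : nat)
  (pi : nat -> R) (Y : nat -> nat -> R) (theta psi : nat -> 'rV[R]_r) al be ph nu tau :
  uniq A -> (forall a, a \in A -> 0 < pi a) ->
  is_ols_minimizer A T pi Y theta psi al be ph nu tau ->
  forall t0 c d, (1 <= t0 <= T)%N ->
  \sum_(a <- A) pi a * (Y a t0 - Phi theta psi al be ph nu tau a t0) * (c + dotv (theta a) d) = 0.
Proof.
move=> uA pos Hmin t0 c d t0T.
have := ols_orth pos Hmin (fun _ => 0) (fun t => if t == t0 then c else 0)
   (fun t => if t == t0 then d else 0) (fun _ => 0) (fun _ _ => 0).
set e := fun a t => Y a t - Phi theta psi al be ph nu tau a t.
rewrite -/e => H; apply: (etrans _ H); apply: eq_bigr => a _.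
rewrite (eq_bigr (fun t => if t == t0 then pi a * e a t * (c + dotv (theta a) d) else 0)).
  by rewrite sum_delta ?iota_uniq // mem_index_iota.
move=> t _; case: (eqVneq t t0) => [->|ntt]; first by rewrite /e /Phi eqxx dotv0l; ring.
by rewrite /Phi (negbTE ntt) dotv0l dotv0r; ring.
Qed.

Definition DD (R : realFieldType) (A : seq nat) (T : nat) (w lam : nat -> R) (a p : nat)
  (g : nat -> nat -> R) : R :=
  (g a p - \sum_(j <- later_cohorts A a) w j * g j p)
  - \sum_(l <- periods_before T p) lam l * (g a l - \sum_(j <- later_cohorts A a) w j * g j l).

Lemma DD_add (R : realFieldType) A T (w lam : nat -> R) a p g1 g2 :
  DD A T w lam a p (fun b s => g1 b s + g2 b s) = DD A T w lam a p g1 + DD A T w lam a p g2.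
Proof.
rewrite /DD /=.
have E : forall s, \sum_(j <- later_cohorts A a) w j * (g1 j s + g2 j s) =
   \sum_(j <- later_cohorts A a) w j * g1 j s + \sum_(j <- later_cohorts A a) w j * g2 j s.
  by move=> s; rewrite -big_split; apply: eq_bigr => j _ /=; ring.
rewrite E.
have -> : \sum_(l <- periods_before T p) lam l * (g1 a l + g2 a l -
    (\sum_(j <- later_cohorts A a) w j * (g1 j l + g2 j l))) =
  \sum_(l <- periods_before T p) lam l * (g1 a l - \sum_(j <- later_cohorts A a) w j * g1 j l)
  + \sum_(l <- periods_before T p) lam l * (g2 a l - \sum_(j <- later_cohorts A a) w j * g2 j l).
  by rewrite -big_split; apply: eq_bigr => l _ /=; rewrite E; ring.
ring.
Qed.

Lemma DD_ext (R : realFieldType) A T (w lam : nat -> R) a p g1 g2 :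
  (forall b s, (b == a) || (b \in later_cohorts A a) ->
     (s == p) || (s \in periods_before T p) -> g1 b s = g2 b s) ->
  DD A T w lam a p g1 = DD A T w lam a p g2.
Proof.
move=> H; rewrite /DD.
have E : forall s, (s == p) || (s \in periods_before T p) ->
  \sum_(j <- later_cohorts A a) w j * g1 j s = \sum_(j <- later_cohorts A a) w j * g2 j s.
  by move=> s hs; rewrite big_seq [RHS]big_seq; apply: eq_bigr => j jL; rewrite H ?jL ?orbT.
rewrite E ?eqxx // H ?eqxx //; congr (_ - _ - _).
rewrite big_seq [RHS]big_seq; apply: eq_bigr => l lP.
by rewrite E ?lP ?orbT // H ?eqxx ?lP ?orbT.
Qed.

Lemma DD_ind (R : realFieldType) A T (w lam : nat -> R) a p (x : R) :
  DD A T w lam a p (fun b s => if (b == a) && (s == p) then x else 0) = x.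
Proof.
rewrite /DD eqxx eqxx /=.
rewrite big_seq big1 => [|j]; last first.
  rewrite mem_filter => /andP [aj _]; rewrite (_ : (j == a) = false) ?mulr0 //.
  by apply/negbTE; rewrite neq_ltn aj orbT.
rewrite big_seq big1 => [|l]; first by rewrite !subr0.
rewrite mem_filter => /andP [lp _]; rewrite (_ : (l == p) = false) ?andbF; last first.
  by apply/negbTE; rewrite neq_ltn lp.
rewrite big_seq big1 ?subr0 ?mulr0 // => j _; by rewrite andbF mulr0.
Qed.

Lemma dotvNl (R : realFieldType) r (u v : 'rV[R]_r) : dotv (- v) u = - dotv v u.
Proof. by rewrite -scaleN1r dotvZl mulN1r. Qed.

Lemma DD_f (R : realFieldType) r A T (theta psi : nat -> 'rV[R]_r) (w lam : nat -> R) a p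
   (al be : nat -> R) (ph nu : nat -> 'rV[R]_r) :
  \sum_(j <- later_cohorts A a) w j = 1 ->
  \sum_(j <- later_cohorts A a) w j *: theta j = theta a ->
  \sum_(l <- periods_before T p) lam l = 1 ->
  \sum_(l <- periods_before T p) lam l *: psi l = psi p ->
  DD A T w lam a p (fun b s => al b + be s + dotv (theta b) (ph s) + dotv (nu b) (psi s)) = 0.
Proof.
move=> w1 wth l1 lps.
set L := later_cohorts A a.
set K := al a - \sum_(j <- L) w j * al j.
set N := nu a - \sum_(j <- L) w j *: nu j.
have E : forall s, al a + be s + dotv (theta a) (ph s) + dotv (nu a) (psi s) -
   \sum_(j <- L) w j * (al j + be s + dotv (theta j) (ph s) + dotv (nu j) (psi s))
   = K + dotv N (psi s).
  move=> s.
  have -> : \sum_(j <- L) w j * (al j + be s + dotv (theta j) (ph s) + dotv (nu j) (psi s))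
    = \sum_(j <- L) w j * al j + (\sum_(j <- L) w j) * be s
      + dotv (\sum_(j <- L) w j *: theta j) (ph s) + dotv (\sum_(j <- L) w j *: nu j) (psi s).
    rewrite !dotv_suml mulr_suml -!big_split /=; apply: eq_bigr => j _ /=; ring.
  rewrite w1 wth /K /N dotvDl dotvNl; ring.
rewrite /DD E.
have -> : \sum_(l <- periods_before T p) lam l *
   (al a + be l + dotv (theta a) (ph l) + dotv (nu a) (psi l) -
    \sum_(j <- L) w j * (al j + be l + dotv (theta j) (ph l) + dotv (nu j) (psi l)))
  = K * (\sum_(l <- periods_before T p) lam l) + dotv N (\sum_(l <- periods_before T p) lam l *: psi l).
  rewrite dotv_sumr mulr_sumr -big_split /=; apply: eq_bigr => l _ /=; rewrite E; ring.
rewrite l1 lps; ring.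
Qed.

Lemma mem_pb T p l : l \in periods_before T p -> [/\ (1 <= l)%N, (l <= T)%N & (l < p)%N].
Proof. rewrite mem_filter mem_iota => /andP [lp /andP [l1 lT]]; split => //; lia. Qed.

Lemma DD_e (R : realFieldType) r A T (pi : nat -> R) (theta psi : nat -> 'rV[R]_r)
  (e : nat -> nat -> R) (w lam : nat -> R) a p c d c' d' :
  a \in A -> (a <= p)%N -> (1 <= p <= T)%N ->
  (forall b t, b \in A -> (b <= t)%N -> (1 <= t <= T)%N -> e b t = 0) ->
  (forall j c d, j \in A -> \sum_(1 <= t < T.+1) e j t * (c + dotv (psi t) d) = 0) ->
  (forall t c d, (1 <= t <= T)%N -> \sum_(b <- A) pi b * e b t * (c + dotv (theta b) d) = 0) ->
  (forall j, j \in later_cohorts A a -> w j = pi j * (c + dotv (theta j) d)) ->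
  (forall l, l \in periods_before T p -> lam l = c' + dotv (psi l) d') ->
  DD A T w lam a p e = 0.
Proof.
move=> aA ap pT N1 N2 N3 wE lE.
set L := later_cohorts A a.
set F := fun b t => pi b * e b t * (c + dotv (theta b) d).
have Wsum : forall t, (1 <= t <= T)%N ->
   \sum_(j <- L) w j * e j t = - \sum_(b <- A | ~~ (a < b)%N) F b t.
  move=> t tT; have := N3 t c d tT; rewrite (bigID (fun b => (a < b)%N)) /= -big_filter.
  have -> : \sum_(i <- [seq i <- A | (a < i)%N]) pi i * e i t * (c + dotv (theta i) d)
     = \sum_(j <- L) w j * e j t.
    rewrite big_seq [RHS]big_seq; apply: eq_bigr => j jL; rewrite wE //; ring.
  by move/eqP; rewrite addr_eq0 => /eqP.
have Lsum : forall j, j \in A -> (j <= a)%N ->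
   \sum_(l <- periods_before T p) lam l * e j l = 0.
  move=> j jA ja; have := N2 j c' d' jA.
  rewrite /index_iota subSS subn0 (bigID (fun t => (t < p)%N)) /= -big_filter.
  have Z : \sum_(i <- iota 1 T | ~~ (i < p)%N) e j i * (c' + dotv (psi i) d') = 0.
    rewrite big_seq_cond big1 // => t /andP [tI tp].
    rewrite N1 ?mul0r //; move: tI tp; rewrite mem_iota; lia.
  rewrite Z addr0.
  move=> H; apply: (etrans _ H); rewrite big_seq [RHS]big_seq; apply: eq_bigr => l lP.
  by rewrite lE // mulrC.
rewrite /DD -/L (N1 a p) //.
rewrite Wsum //.
have -> : \sum_(b <- A | ~~ (a < b)%N) F b p = 0.
  rewrite big_seq_cond big1 // => b /andP [bA ab].
  by rewrite /F (N1 b p) ?mulr0 ?mul0r //; lia.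
have -> : \sum_(l <- periods_before T p) lam l * (e a l - \sum_(j <- L) w j * e j l)
   = \sum_(l <- periods_before T p) lam l * e a l
     + \sum_(b <- A | ~~ (a < b)%N) \sum_(l <- periods_before T p)
          pi b * (c + dotv (theta b) d) * (lam l * e b l).
  rewrite exchange_big /= -big_split big_seq [RHS]big_seq; apply: eq_bigr => l lP /=.
  have [l1 lT _] := mem_pb lP.
  rewrite Wsum ?l1 ?lT // opprK mulrDr mulr_sumr; congr (_ + _).
  by apply: eq_bigr => b _; rewrite /F; ring.
rewrite Lsum // big_seq_cond big1; last first.
  by move=> b /andP [bA ab]; rewrite -mulr_sumr Lsum ?mulr0 //; lia.
ring.
Qed.

Lemma omega_form (R : realFieldType) r (A : seq nat) (pi : nat -> R)
  (theta : nat -> 'rV[R]_r) a astar :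
  uniq A -> (forall a, a \in A -> 0 < pi a) -> (a <= astar)%N ->
  affinely_spans (later_cohorts A astar) theta ->
  exists c d, omega_feasible A theta a (omega_tilde A pi theta a) /\
    forall j, j \in later_cohorts A a ->
      omega_tilde A pi theta a j = pi j * (c + dotv (theta j) d).
Proof.
move=> uA pos aas aff.
have aff' : affinely_spans (later_cohorts A a) theta.
  apply: (aff_sub _ _ _ aff); rewrite ?filter_uniq //.
  move=> j; rewrite !mem_filter => /andP [aj ->]; rewrite andbT; lia.
have posS : forall j, j \in later_cohorts A a -> 0 < pi j.
  by move=> j; rewrite mem_filter => /andP [_ /pos].
have [c [d [Hm Hu]]] := minnorm_char (theta a) posS aff'.
have Hs : is_omega_tilde A pi theta a (omega_tilde A pi theta a).
  exact: (epsilon_spec (inhabits (fun _ : nat => (0 : R))) (is_omega_tilde A pi theta a)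
            (ex_intro _ _ Hm)).
exists c, d; split; first exact: Hs.1.
by move=> j jS; apply: Hu.
Qed.

Lemma lambda_form (R : realFieldType) r T (psi : nat -> 'rV[R]_r) p tstar :
  (tstar <= p)%N -> affinely_spans (periods_before T tstar) psi ->
  exists c d, lambda_feasible T psi p (lambda_tilde T psi p) /\
    forall l, l \in periods_before T p ->
      lambda_tilde T psi p l = 1 * (c + dotv (psi l) d).
Proof.
move=> tp aff.
have aff' : affinely_spans (periods_before T p) psi.
  apply: (aff_sub _ _ _ aff); rewrite ?filter_uniq ?iota_uniq //.
  move=> j; rewrite !mem_filter => /andP [aj ->]; rewrite andbT; lia.
have pos1 : forall l, l \in periods_before T p -> (0 : R) < 1 by [].
have [c [d [Hm Hu]]] := minnorm_char (psi p) pos1 aff'.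
have conv : forall (S : seq nat) (w : nat -> R),
    \sum_(l <- S) w l ^+ 2 / 1 = \sum_(l <- S) w l ^+ 2.
  by move=> S w; apply: eq_bigr => l _; rewrite divr1.
have Hs : is_lambda_tilde T psi p (lambda_tilde T psi p).
  apply: (epsilon_spec (inhabits (fun _ : nat => (0 : R))) (is_lambda_tilde T psi p)).
  exists (fun j => 1 * (c + dotv (psi j) d)); split; first exact: Hm.1.
  move=> w' Fw'; rewrite -!conv; exact: Hm.2.
exists c, d; split; first exact: Hs.1.
move=> l lS; apply: Hu => //; split; first exact: Hs.1.
move=> w' Fw'; rewrite !conv; exact: Hs.2.
Qed.

Definition InvY (R : realFieldType) (Y tau : nat -> nat -> R) (D : nat -> nat -> bool)
  (Yc : nat -> nat -> R) : Prop :=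
  forall b s, Yc b s = if (b <= s)%N && D b (s - b)%N then Y b s - tau b (s - b)%N else Y b s.

Definition InvT (R : realFieldType) (tau : nat -> nat -> R) (D : nat -> nat -> bool)
  (tc : nat -> nat -> R) : Prop :=
  forall b m, D b m -> tc b m = tau b m.

Lemma Inv_ext (R : realFieldType) (Y tau : nat -> nat -> R) D1 D2 st :
  (forall b m, D1 b m = D2 b m) ->
  InvY Y tau D1 st.1 /\ InvT tau D1 st.2 -> InvY Y tau D2 st.1 /\ InvT tau D2 st.2.
Proof.
move=> E [H1 H2]; split => b s; first by rewrite -E; apply: H1.
by rewrite -E; apply: H2.
Qed.

Lemma step_ok (R : realFieldType) r (A : seq nat) (T : nat)
  (pi : nat -> R) (Y : nat -> nat -> R) (theta psi : nat -> 'rV[R]_r)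
  (tstar astar : nat) al be ph nu tau D D' st a k :
  uniq A -> (forall a, a \in A -> (1 <= a <= T.+1)%N) ->
  (forall a, a \in A -> 0 < pi a) ->
  (1 <= tstar)%N -> (astar <= T)%N ->
  affinely_spans (later_cohorts A astar) theta ->
  affinely_spans (periods_before T tstar) psi ->
  is_ols_minimizer A T pi Y theta psi al be ph nu tau ->
  a \in A -> (tstar <= a)%N -> (a + k <= astar)%N ->
  InvY Y tau D st.1 -> InvT tau D st.2 -> ~~ D a k ->
  (forall b m, b \in A -> (a <= b)%N -> (m < k)%N -> (b + m <= a + k)%N -> D b m) ->
  (forall b m, D' b m = D b m || (b == a) && (m == k)) ->
  InvY Y tau D' (seq_ols_step A T pi theta psi st (a, k)).1 /\
  InvT tau D' (seq_ols_step A T pi theta psi st (a, k)).2.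
Proof.
move=> uA Arng pos t1 aT aff1 aff2 Hmin aA ta ak IY IT nD pre ED'.
case: st IY IT => Yc tc /= IY IT.
set p := (a + k)%N.
have [c [d [[w1 wth] wE]]] := @omega_form R r A pi theta a astar uA pos ltac:(lia) aff1.
have [c' [d' [[l1 lps] lE]]] := @lambda_form R r T psi p tstar ltac:(lia) aff2.
set w := omega_tilde A pi theta a in w1 wth wE.
set lam := lambda_tilde T psi p in l1 lps lE.
set e := fun b s => Y b s - Phi theta psi al be ph nu tau b s.
set f := fun b s => al b + be s + dotv (theta b) (ph s) + dotv (nu b) (psi s).
have Hthat : DD A T w lam a p Yc = tau a k.
  transitivity (DD A T w lam a p (fun b s => (f b s + e b s) +
      (if (b == a) && (s == p) then tau a k else 0))).
    apply: DD_ext => b s hb hs.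
    have bA : b \in A by case/orP: hb => [/eqP ->|]; rewrite // mem_filter => /andP [].
    have ab : (a <= b)%N.
      by case/orP: hb => [/eqP ->|]; rewrite // mem_filter => /andP [? _]; lia.
    have sp : (s <= p)%N by case/orP: hs => [/eqP ->|/mem_pb [_ _]] //; lia.
    have s1 : (1 <= s <= T)%N.
      case/orP: hs => [/eqP ->|/mem_pb [? ? _]]; lia.
    have EY : Y b s = f b s + ((b <= s)%N)%:R * tau b (s - b)%N + e b s.
      by rewrite /e /f /Phi; ring.
    rewrite IY.
    case: (eqVneq b a) => [eba|nba]; case: (eqVneq s p) => [esp|nsp] /=.
    - rewrite eba esp in EY *; rewrite /p addKn leq_addr (negbTE nD) /= EY addKn leq_addr; rewrite /p /= mul1r; ring.
    - case: (leqP b s) => bs /=.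
        rewrite pre //; first by rewrite EY bs /= mulr1n mul1r; ring.
        move: nsp; rewrite /p; lia.
        lia.
      by rewrite EY (_ : (b <= s)%N = false) /= ?mulr0n ?mul0r; [ring | apply/negbTE; rewrite -ltnNge].
    - case: (leqP b s) => bs /=.
        rewrite pre //; first by rewrite EY bs /= mulr1n mul1r; ring.
        lia.
        lia.
      by rewrite EY (_ : (b <= s)%N = false) /= ?mulr0n ?mul0r; [ring | apply/negbTE; rewrite -ltnNge].
    - case: (leqP b s) => bs /=.
        rewrite pre //; first by rewrite EY bs /= mulr1n mul1r; ring.
        move: nsp; rewrite /p; lia.
        lia.
      by rewrite EY (_ : (b <= s)%N = false) /= ?mulr0n ?mul0r; [ring | apply/negbTE; rewrite -ltnNge].
  rewrite DD_add DD_add /f DD_f // DD_ind.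
  rewrite (@DD_e R r A T pi theta psi e w lam a p c d c' d') //.
  - by rewrite !add0r.
  - by rewrite /p leq_addr.
  - apply/andP; split; [apply: leq_trans t1 _; lia | lia].
  - by move=> b t bA bt tT; apply: (NE1 uA pos Hmin bA bt tT).
  - by move=> j c0 d0 jA; apply: (NE2 uA pos Hmin c0 d0 jA).
  - by move=> t c0 d0 tT; apply: (NE3 uA pos Hmin c0 d0 tT).
  - by move=> l lS; rewrite lE // mul1r.
have Ethat : (Yc a (a + k)%N - \sum_(j <- later_cohorts A a) w j * Yc j (a + k)%N) -
     \sum_(l <- periods_before T (a + k)) lam l * (Yc a l -
        \sum_(j <- later_cohorts A a) w j * Yc j l) = tau a k by [].
rewrite Ethat; split => b s.
  rewrite ED' IY /=.
  case: (eqVneq b a) => [->|nba] /=; last by rewrite orbF.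
  case: (eqVneq s p) => [->|nsp] /=.
    by rewrite /p addKn leq_addr (negbTE nD) eqxx.
  case: (leqP a s) => as_ //=.
  by rewrite (_ : (s - a == k)%N = false) ?orbF //; apply/negbTE; move: nsp; rewrite /p; lia.
rewrite ED' /= => /orP [Db|/andP [/eqP -> /eqP ->]].
  case: ifP => [/andP [/eqP ba /eqP bk]|_]; last exact: IT.
  by move: Db nD; rewrite ba bk => ->.
by rewrite !eqxx.
Qed.

Lemma inner_ok (R : realFieldType) r (A : seq nat) (T : nat)
  (pi : nat -> R) (Y : nat -> nat -> R) (theta psi : nat -> 'rV[R]_r)
  (tstar astar : nat) al be ph nu tau k :
  uniq A -> (forall a, a \in A -> (1 <= a <= T.+1)%N) ->
  (forall a, a \in A -> 0 < pi a) ->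
  (1 <= tstar)%N -> (astar <= T)%N ->
  affinely_spans (later_cohorts A astar) theta ->
  affinely_spans (periods_before T tstar) psi ->
  is_ols_minimizer A T pi Y theta psi al be ph nu tau ->
  let Dp := fun (pre : seq nat) (b m : nat) =>
    ((m < k)%N && (b \in A) && (tstar <= b)%N && (b + m <= astar)%N) || (m == k) && (b \in pre) in
  forall s pre st, uniq (pre ++ s) ->
  (forall a, a \in s -> [/\ a \in A, (tstar <= a)%N & (a + k <= astar)%N]) ->
  InvY Y tau (Dp pre) st.1 /\ InvT tau (Dp pre) st.2 ->
  InvY Y tau (Dp (pre ++ s)) (foldl (seq_ols_step A T pi theta psi) st [seq (a, k) | a <- s]).1 /\
  InvT tau (Dp (pre ++ s)) (foldl (seq_ols_step A T pi theta psi) st [seq (a, k) | a <- s]).2.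
Proof.
move=> uA Arng pos t1 aT aff1 aff2 Hmin Dp.
elim=> [|a s IH] pre st upre hs Hinv; first by rewrite cats0.
rewrite /= -cat_rcons; apply: IH; first by rewrite cat_rcons.
  by move=> x xs; apply: hs; rewrite in_cons xs orbT.
have [aA ta ak] := hs a (mem_head _ _).
have anpre : a \notin pre.
  by move: upre; rewrite cat_uniq => /and3P [_ /hasPn H _]; apply: H; rewrite mem_head.
case: Hinv => IY IT.
apply: (@step_ok R r A T pi Y theta psi tstar astar al be ph nu tau (Dp pre)) => //.
- rewrite /Dp ltnn /= eqxx /=; exact: anpre.
- move=> b m bA ab mk bm; rewrite /Dp bA mk /=.
  apply/orP; left; apply/andP; split; first by lia.
  by lia.
- move=> b m; rewrite /Dp mem_rcons in_cons.
  by case: (m < k)%N; case: (b \in A); case: (tstar <= b)%N; case: (b + m <= astar)%N;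
     case: (m == k); case: (b == a); case: (b \in pre).
Qed.

Lemma outer_ok (R : realFieldType) r (A : seq nat) (T : nat)
  (pi : nat -> R) (Y : nat -> nat -> R) (theta psi : nat -> 'rV[R]_r)
  (tstar astar : nat) al be ph nu tau :
  uniq A -> (forall a, a \in A -> (1 <= a <= T.+1)%N) ->
  (forall a, a \in A -> 0 < pi a) ->
  (1 <= tstar)%N -> (tstar <= astar)%N -> (astar <= T)%N ->
  affinely_spans (later_cohorts A astar) theta ->
  affinely_spans (periods_before T tstar) psi ->
  is_ols_minimizer A T pi Y theta psi al be ph nu tau ->
  forall n, (n <= (astar - tstar).+1)%N ->
  let Dn := fun (b m : nat) =>
    (m < n)%N && (b \in A) && (tstar <= b)%N && (b + m <= astar)%N in
  let st := foldl (seq_ols_step A T pi theta psi) (Y, fun _ _ => 0)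
     (flatten [seq [seq (a, k) | a <- [seq a <- iota tstar (astar - k - tstar).+1
                                   | a \in A]]
          | k <- iota 0 n]) in
  InvY Y tau Dn st.1 /\ InvT tau Dn st.2.
Proof.
move=> uA Arng pos t1 tas aT aff1 aff2 Hmin.
elim=> [|n IH] hn Dn st.
  split => b s //=; rewrite /Dn ltn0 /= andbF //.
have {IH} := IH ltac:(lia); cbv zeta => IH.
rewrite /st -addn1 iotaD map_cat flatten_cat foldl_cat.
have flat1 : forall (X : Type) (x : seq X), flatten [:: x] = x by move=> X x; rewrite /= cats0.
rewrite [iota (0 + n) 1]/= flat1.
rewrite add0n.
set s := [seq a <- iota tstar (astar - n - tstar).+1 | a \in A].
have us : uniq ([::] ++ s) by rewrite /= /s filter_uniq ?iota_uniq.
have hs : forall a, a \in s -> [/\ a \in A, (tstar <= a)%N & (a + n <= astar)%N].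
  move=> a; rewrite /s mem_filter mem_iota => /andP [aA /andP [ta as_]]; split => //; lia.
have IH' := Inv_ext (D2 := fun b m => ((m < n)%N && (b \in A) && (tstar <= b)%N && (b + m <= astar)%N) || (m == n) && (b \in [::])) _ IH.
have := @inner_ok R r A T pi Y theta psi tstar astar al be ph nu tau n uA Arng pos t1 aT
  aff1 aff2 Hmin s [::] _ us hs (IH' ltac:(by move=> b m; rewrite in_nil andbF orbF)).
move=> H; apply: Inv_ext H.
- move=> b m /=; rewrite /s mem_filter mem_iota.
  rewrite /Dn; case: (b \in A); rewrite /= ?andbF ?andFb ?andbT ?orbF //; apply/idP/idP; lia.
Qed.

Theorem proposition1 (R : realFieldType) (r T : nat) (A : seq nat)
  (pi : nat -> R) (Y : nat -> nat -> R) (theta psi : nat -> 'rV[R]_r)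
  (tstar astar : nat) :
  uniq A ->
  (forall a, a \in A -> (1 <= a <= T.+1)%N) ->
  (forall a, a \in A -> 0 < pi a) ->
  (1 <= tstar)%N -> (tstar <= astar)%N -> (astar <= T)%N ->
  affinely_spans (later_cohorts A astar) theta ->
  affinely_spans (periods_before T tstar) psi ->
  (exists (al be : nat -> R) (ph nu : nat -> 'rV[R]_r) (tau : nat -> nat -> R),
      is_ols_minimizer A T pi Y theta psi al be ph nu tau) /\
  (forall (al be : nat -> R) (ph nu : nat -> 'rV[R]_r) (tau : nat -> nat -> R),
      is_ols_minimizer A T pi Y theta psi al be ph nu tau ->
      forall a k : nat, a \in A -> (tstar <= a)%N -> (a + k <= astar)%N ->
        tau a k = seq_ols A T pi Y theta psi tstar astar a k).
Proof.
move=> uA Arng pos t1 tas aT aff1 aff2; split; first exact: ols_exists.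
move=> al be ph nu tau Hmin a k aA ta ak.
have := @outer_ok R r A T pi Y theta psi tstar astar al be ph nu tau uA Arng pos t1 tas aT
  aff1 aff2 Hmin (astar - tstar).+1 (leqnn _).
cbv zeta => [[_ IT]].
rewrite /seq_ols /seq_ols_order IT //.
rewrite aA /=; apply/andP; split; [apply/andP; split|]; lia.
Qed.
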